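(* Let $\mathcal{H}_1,\mathcal{H}_2$ be Hilbert spaces and $T:\mathcal{D}(T)\subseteq\mathcal{H}_1\to\mathcal{H}_2$ a linear operator. Then $T^{\times}$ is boundedly invertible if and only if $T^{\times\times}$ is boundedly invertible. In particular, if $T$ is densely defined and closable, then $T^*$ is boundedly invertible if and only if $\overline{T}$ is boundedly invertible.
   Context: An operator $A:\mathcal{D}(A)\subseteq\mathcal{K}_1\to\mathcal{K}_2$ is boundedly invertible if there is a bounded operator $S:\mathcal{K}_2\to\mathcal{K}_1$ with $ASg=g$ for all $g\in\mathcal{K}_2$ and $SAf=f$ for all $f\in\mathcal{D}(A)$. Let $\mathcal{H}_T=\overline{\mathcal{D}(T)}$ and $T^{\times}:=(T|_{\mathcal{H}_T})^*$, the usual adjoint of $T$ regarded as a densely defined operator from $\mathcal{D}(T)\subseteq\mathcal{H}_T$ to $\mathcal{H}_2$; $T^\times$ is regarded as an operator from $\mathcal{H}_{T^\times}:=\overline{\mathcal{D}(T^\times)}$ into $\mathcal{H}_T$. Further $T^{\times\times}:=\big((T^{\times})|_{\mathcal{H}_{T^{\times}}}\big)^*$, an operator from (a domain in) $\mathcal{H}_T$ into $\mathcal{H}_{T^\times}$. *)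

(* Defs.v *)
(* Hilbert spaces over the complex numbers C := R[i]
   (R : realType) are modelled as complete normed C-modules whose norm is
   induced by an inner product (linear in the first argument, conjugate
   symmetric, <x,x> = ||x||^2).  Operators are partial maps with an explicit
   domain; closed subspaces K of a Hilbert space are represented as subsets. *)
From mathcomp Require Import all_boot all_order all_algebra.
From mathcomp Require Import all_classical all_reals all_analysis.
From mathcomp Require Export complex.
Export numFieldNormedType.Exports.

Set Implicit Arguments.
Unset Strict Implicit.
Unset Printing Implicit Defensive.

Import Order.TTheory GRing.Theory Num.Theory.
Local Open Scope ring_scope.
Local Open Scope classical_set_scope.

Section Hilbert.
Variable R : realType.
Local Notation C := (R[i]).

Definition is_inner_product (H : completeNormedModType C) (ip : H -> H -> C) : Prop :=
  [/\ (forall (a : C) (x y z : H), ip (a *: x + y) z = a * ip x z + ip y z),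
      (forall x y : H, ip x y = Num.conj (ip y x)) &
      (forall x : H, ip x x = `|x| ^+ 2)].

Record operator (H1 H2 : completeNormedModType C) := Operator {
  dom : set H1;
  op : H1 -> H2 }.

Definition linear_operator (H1 H2 : completeNormedModType C) (T : operator H1 H2) : Prop :=
  [/\ dom T 0,
      (forall (a : C) (x y : H1), dom T x -> dom T y -> dom T (a *: x + y)) &
      (forall (a : C) (x y : H1), dom T x -> dom T y ->
          op T (a *: x + y) = a *: op T x + op T y)].

(* Adjoint of A : D(A) ⊆ K1 -> K2 (K1, K2 closed subspaces of H1, H2, D(A)
   dense in K1), as an operator D(A^* ) ⊆ K2 -> K1:
   D(A^* ) = {y in K2 | exists z in K1, forall x in D(A), <Ax,y> = <x,z>},
   A^* y = that (unique) z. *)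
Definition adjoint (H1 H2 : completeNormedModType C)
    (ip1 : H1 -> H1 -> C) (ip2 : H2 -> H2 -> C)
    (K1 : set H1) (K2 : set H2) (A : operator H1 H2) : operator H2 H1 :=
  let P y := [set z : H1 | K1 z /\ forall x, dom A x -> ip2 (op A x) y = ip1 x z] in
  Operator [set y : H2 | K2 y /\ exists z, P y z] (fun y => xget 0 (P y)).

Definition HT (H1 H2 : completeNormedModType C) (T : operator H1 H2) : set H1 :=
  closure (dom T).

(* T^× = (T|_{H_T})^* : D(T^×) ⊆ H2 -> H_T *)
Definition Tx (H1 H2 : completeNormedModType C)
    (ip1 : H1 -> H1 -> C) (ip2 : H2 -> H2 -> C) (T : operator H1 H2) : operator H2 H1 :=
  adjoint ip1 ip2 (HT T) setT T.

(* T^×× = ((T^×)|_{H_{T^×}})^* : D(T^××) ⊆ H_T -> H_{T^×} *)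
Definition Txx (H1 H2 : completeNormedModType C)
    (ip1 : H1 -> H1 -> C) (ip2 : H2 -> H2 -> C) (T : operator H1 H2) : operator H1 H2 :=
  adjoint ip2 ip1 (HT (Tx ip1 ip2 T)) (HT T) (Tx ip1 ip2 T).

Definition Tstar (H1 H2 : completeNormedModType C)
    (ip1 : H1 -> H1 -> C) (ip2 : H2 -> H2 -> C) (T : operator H1 H2) : operator H2 H1 :=
  adjoint ip1 ip2 setT setT T.

Definition boundedly_invertible (H1 H2 : completeNormedModType C)
    (K1 : set H1) (K2 : set H2) (A : operator H1 H2) : Prop :=
  exists S : H2 -> H1,
    [/\ (forall g, K2 g -> K1 (S g)),
        (forall (a : C) (g h : H2), K2 g -> K2 h -> S (a *: g + h) = a *: S g + S h),
        (exists c : C, 0 <= c /\ forall g, K2 g -> `|S g| <= c * `|g|),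
        (forall g, K2 g -> dom A (S g) /\ op A (S g) = g) &
        (forall f, dom A f -> S (op A f) = f)].

Definition densely_defined (H1 H2 : completeNormedModType C) (T : operator H1 H2) : Prop :=
  closure (dom T) = setT.

Definition graph (H1 H2 : completeNormedModType C) (T : operator H1 H2) : set (H1 * H2) :=
  [set p | dom T p.1 /\ p.2 = op T p.1].

(* T closable: the closure of its graph is the graph of an operator *)
Definition closable (H1 H2 : completeNormedModType C) (T : operator H1 H2) : Prop :=
  forall y : H2, closure (graph T) (0, y) -> y = 0.

Definition op_closure (H1 H2 : completeNormedModType C) (T : operator H1 H2) : operator H1 H2 :=
  Operator [set x | exists y, closure (graph T) (x, y)]
           (fun x => xget 0 [set y | closure (graph T) (x, y)]).

End Hilbert.

(* Main.v *)
Require Import Defs.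
From mathcomp Require Import all_boot all_order all_algebra.
From mathcomp Require Import all_classical all_reals all_analysis.
From mathcomp Require Import ring lra.
Import numFieldNormedType.Exports.
Import Order.TTheory GRing.Theory Num.Theory.
Set Implicit Arguments.
Unset Strict Implicit.
Unset Printing Implicit Defensive.
Local Open Scope ring_scope.
Local Open Scope classical_set_scope.

Section Gen.
Variable R : realType.
Local Notation C := R[i].

Lemma closure_normP (V : normedModType C) (A : set V) p :
  closure A p <-> forall e : C, 0 < e -> exists2 a, A a & `|p - a| < e.
Proof.
split.
  move=> cl e e0; have [a [Aa]] := cl _ (nbhsx_ballx p e e0).
  by rewrite -ball_normE /= => h; exists a.
move=> h B /nbhs_ballP [e /= e0 sub]; have [a Aa pa] := h e e0.
by exists a; split=> //; apply: sub; rewrite -ball_normE.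
Qed.

Lemma small_eq0 (z K : C) : 0 <= K -> (forall e : C, 0 < e -> `|z| <= e * K) -> z = 0.
Proof.
move=> K0 h; apply/eqP; apply: contraT => z0.
have K1 : 0 < K + 1 by rewrite ltr_wpDl.
have := h (`|z| / (K + 1)); rewrite divr_gt0 ?normr_gt0 // => /(_ isT).
rewrite mulrAC ler_pdivlMr // mulrDr mulr1 gerDl.
by rewrite normr_le0 (negbTE z0).
Qed.

Definition subspace {V : lmodType C} (A : set V) :=
  A 0 /\ forall a x y, A x -> A y -> A (a *: x + y).

Lemma subspaceD (V : lmodType C) (A : set V) x y : subspace A -> A x -> A y -> A (x + y).
Proof. by case=> _ h Ax Ay; rewrite -[x]scale1r; apply: h. Qed.
Lemma subspaceZ (V : lmodType C) (A : set V) a x : subspace A -> A x -> A (a *: x).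
Proof. by case=> h0 h Ax; rewrite -[_ *: _]addr0; apply: h. Qed.
Lemma subspaceN (V : lmodType C) (A : set V) x : subspace A -> A x -> A (- x).
Proof. by move=> sA Ax; rewrite -scaleN1r; apply: subspaceZ. Qed.
Lemma subspaceB (V : lmodType C) (A : set V) x y : subspace A -> A x -> A y -> A (x - y).
Proof. by move=> sA Ax Ay; apply: subspaceD => //; apply: subspaceN. Qed.

Lemma closure_subspace (V : normedModType C) (A : set V) :
  subspace A -> subspace (closure A).
Proof.
move=> sA; split; first by apply: subset_closure; case: sA.
move=> a x y /closure_normP cx /closure_normP cy; apply/closure_normP => e e0.
have k0 : 0 < `|a| + 1 by rewrite ltr_wpDl.
have e2 : 0 < e / 2 by rewrite divr_gt0.
have [x' Ax' hx] := cx (e / 2 / (`|a| + 1)) (divr_gt0 e2 k0).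
have [y' Ay' hy] := cy (e / 2) e2.
exists (a *: x' + y'); first by case: sA => _; apply.
have -> : a *: x + y - (a *: x' + y') = a *: (x - x') + (y - y').
  by rewrite scalerBr opprD addrACA.
apply: (le_lt_trans (ler_normD _ _)); rewrite normrZ.
rewrite [e]splitr ltr_leD //; last exact: ltW.
have : `|a| * `|x - x'| <= (`|a| + 1) * `|x - x'|.
  by rewrite ler_wpM2r // lerDl.
move/le_lt_trans; apply.
by rewrite mulrC -ltr_pdivlMr.
Qed.

Lemma cauchy_family (V : completeNormedModType C) (A : R -> set V) :
  (forall r, 0 < r -> A r !=set0) ->
  (forall r s, 0 < r -> r <= s -> A r `<=` A s) ->
  (forall eps : C, 0 < eps -> exists2 r, 0 < r &
     forall u v, A r u -> A r v -> `|u - v| < eps) ->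
  exists p : V, forall eps : C, 0 < eps -> exists2 r, 0 < r &
     forall u, A r u -> `|p - u| < eps.
Proof.
move=> ne mono cau.
pose F := filter_from [set r : R | 0 < r] A.
have FF : ProperFilter F.
  apply: filter_from_proper; last by move=> r /ne.
  apply: filter_from_filter; first by exists 1; rewrite /= ltr01.
  move=> r s /= r0 s0; have m0 : 0 < Num.min r s by rewrite lt_min r0 s0.
  exists (Num.min r s) => //.
  move=> x Ax; split.
    by apply: (mono (Num.min r s)) Ax; rewrite // ge_min lexx.
  by apply: (mono (Num.min r s)) Ax; rewrite // ge_min lexx orbT.
have cF : cauchy F.
  apply: cauchy_exP => eps eps0; have [r r0 h] := cau eps eps0.
  have [u Au] := ne r r0; exists u; exists r => //= v Av.
  by rewrite -ball_normE /=; apply: h.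
have Fp : F --> lim F by apply: cauchy_cvg.
exists (lim F) => eps eps0.
have [r r0 sub] : F (ball (lim F) eps) by apply: Fp; apply: nbhsx_ballx.
by exists r => // u Au; have := sub u Au; rewrite -ball_normE.
Qed.
End Gen.
Arguments subspace {R V} A.
Arguments small_eq0 {R} z K.

Section IP.
Variable R : realType.
Local Notation C := R[i].
Variables (H : completeNormedModType C) (ip : H -> H -> C).
Variable hip : is_inner_product ip.

Lemma ip_lin a x y z : ip (a *: x + y) z = a * ip x z + ip y z.
Proof. by case: hip. Qed.
Lemma ipC x y : ip x y = (ip y x)^*.
Proof. by case: hip. Qed.
Lemma ipJ x y : (ip x y)^* = ip y x.
Proof. by rewrite [ip y x]ipC. Qed.
Lemma ipxx x : ip x x = `|x|^+2.
Proof. by case: hip. Qed.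
Lemma ip0l z : ip 0 z = 0.
Proof.
have := ip_lin 1 0 0 z; rewrite scaler0 addr0 mul1r => h.
have : ip 0 z + ip 0 z - ip 0 z = ip 0 z - ip 0 z by rewrite -h.
by rewrite addrK subrr.
Qed.
Lemma ipDl x y z : ip (x + y) z = ip x z + ip y z.
Proof. by rewrite -[x in LHS]scale1r ip_lin mul1r. Qed.
Lemma ipZl a x z : ip (a *: x) z = a * ip x z.
Proof. by rewrite -[a *: x]addr0 ip_lin ip0l addr0. Qed.
Lemma ipNl x z : ip (- x) z = - ip x z.
Proof. by rewrite -scaleN1r ipZl mulN1r. Qed.
Lemma ipBl x y z : ip (x - y) z = ip x z - ip y z.
Proof. by rewrite ipDl ipNl. Qed.
Lemma ipDr z x y : ip z (x + y) = ip z x + ip z y.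
Proof. by rewrite ipC ipDl rmorphD /= !ipJ. Qed.
Lemma ipZr z a x : ip z (a *: x) = a^* * ip z x.
Proof. by rewrite ipC ipZl rmorphM /= ipJ. Qed.
Lemma ip0r z : ip z 0 = 0.
Proof. by rewrite ipC ip0l conjC0. Qed.
Lemma ipNr z x : ip z (- x) = - ip z x.
Proof. by rewrite ipC ipNl rmorphN /= ipJ. Qed.
Lemma ipBr z x y : ip z (x - y) = ip z x - ip z y.
Proof. by rewrite ipDr ipNr. Qed.
Lemma ip_eq0 x : ip x x = 0 -> x = 0.
Proof. by rewrite ipxx => /eqP; rewrite expf_eq0 /= normr_eq0 => /eqP. Qed.

Lemma CS x y : `|ip x y| <= `|x| * `|y|.
Proof.
have [->|y0] := eqVneq y 0; first by rewrite ip0r !normr0 mulr0.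
set n := `|y| ^+ 2.
have n0 : n != 0 by rewrite /n sqrf_eq0 normr_eq0.
have nc : n^* = n by apply: geC0_conj; rewrite /n exprn_ge0.
set a := ip x y.
set t := a / n.
have h : 0 <= ip (x - t *: y) (x - t *: y) by rewrite ipxx exprn_ge0.
rewrite ipBl !ipBr !ipZl !ipZr ipxx -/n -/a (ipC y x) -/a in h.
rewrite ipxx -/n /t rmorphM /= fmorphV /= nc in h. have e : `|x| ^+ 2 - a^* / n * a - (a / n * a^* - a / n * (a^* / n * n)) =
   `|x| ^+ 2 - a * a^* / n by field.
rewrite e -normCK subr_ge0 ler_pdivrMr in h; last by rewrite lt_def n0 exprn_ge0.
rewrite /n -exprMn in h.
by rewrite -(@ler_pXn2r _ 2) // nnegrE ?mulr_ge0.
Qed.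

Lemma closure_orth (D : set H) w :
  (forall x, D x -> ip x w = 0) -> forall z, closure D z -> ip z w = 0.
Proof.
move=> hD z /closure_normP cz; apply: (@small_eq0 _ _ `|w|) => // e e0.
have [a Da h] := cz e e0.
rewrite -[z](subrK a) ipDl (hD a Da) addr0.
apply: le_trans (CS _ _) _.
by rewrite ler_wpM2r // ltW.
Qed.

Lemma orth_closure0 (D : set H) z :
  closure D z -> (forall x, D x -> ip x z = 0) -> z = 0.
Proof. by move=> cz hD; apply: ip_eq0; apply: closure_orth hD _ cz. Qed.

Definition nr (x : H) : R := complex.Re `|x|.
Lemma nrE x : `|x| = (nr x)%:C%C.
Proof. by rewrite /nr RRe_real // ger0_real. Qed.
Lemma nr_ge0 x : 0 <= nr x.
Proof. by rewrite -(lecR 0) -nrE; apply: normr_ge0. Qed.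
Lemma ipxxR x : ip x x = (nr x ^+ 2)%:C%C.
Proof. by rewrite ipxx nrE rmorphXn. Qed.

Lemma parallelogram u v :
  nr (u + v) ^+ 2 + nr (u - v) ^+ 2 = 2 * nr u ^+ 2 + 2 * nr v ^+ 2.
Proof.
apply: complexI.
have e : ip (u + v) (u + v) + ip (u - v) (u - v) = 2 * ip u u + 2 * ip v v.
  rewrite !(ipDl, ipDr, ipBl, ipBr, ipNl, ipNr); ring.
move: e; rewrite !ipxxR.
by rewrite !rmorphD /= !rmorphM /= !rmorph_nat.
Qed.

Lemma rcM (x y : R) : (x * y)%:C%C = x%:C%C * y%:C%C :> C.
Proof. exact: rmorphM. Qed.
Lemma rcD (x y : R) : (x + y)%:C%C = x%:C%C + y%:C%C :> C.
Proof. exact: rmorphD. Qed.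
Lemma rcN (x : R) : (- x)%:C%C = - x%:C%C :> C.
Proof. exact: rmorphN. Qed.
Lemma rcX (x : R) n : (x ^+ n)%:C%C = x%:C%C ^+ n :> C.
Proof. exact: rmorphXn. Qed.
Lemma rc2 : (2 : R)%:C%C = 2 :> C.
Proof. exact: (rmorph_nat _ 2). Qed.

Lemma nrZ a w : nr (a *: w) = complex.Re `|a| * nr w.
Proof.
have ha : `|a| = (complex.Re `|a|)%:C%C by rewrite RRe_real // ger0_real.
by rewrite {1}/nr normrZ {1}ha nrE -rmorphM.
Qed.

Lemma nrD u v : nr (u + v) <= nr u + nr v.
Proof. by rewrite -lecR rmorphD /= -!nrE ler_normD. Qed.

Lemma nrN u : nr (- u) = nr u.
Proof. by rewrite /nr normrN. Qed.

Lemma proj (M : set H) : subspace M -> closed M ->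
  forall x, exists2 p, M p & forall m, M m -> ip (x - p) m = 0.
Proof.
move=> sM cM x.
pose E := [set y : R | exists2 m, M m & y = nr (x - m) ^+ 2].
have hE : has_inf E.
  split; first by exists (nr (x - 0) ^+ 2); exists 0 => //; case: sM.
  by exists 0 => y [m _ ->]; apply: sqr_ge0.
set d := inf E.
have dle m : M m -> d <= nr (x - m) ^+ 2.
  by move=> Mm; apply: (ge_inf hE.2); exists m.
have adh r : 0 < r -> exists2 m, M m & nr (x - m) ^+ 2 < d + r.
  by move=> r0; have [e [m Mm ->] h] := inf_adherent r0 hE; exists m.
pose A r := [set m | M m /\ nr (x - m) ^+ 2 < d + r].
have [p hp] : exists p : H, forall eps : C, 0 < eps -> exists2 r, 0 < r &
     forall u, A r u -> `|p - u| < eps.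
  apply: cauchy_family.
  - by move=> r /adh [m Mm h]; exists m.
  - by move=> r s r0 rs m [Mm h]; split => //; apply: lt_le_trans h _; rewrite lerD2l.
  move=> eps eps0.
  set ep := complex.Re eps.
  have epsE : eps = ep%:C%C by rewrite RRe_real // ger0_real // ltW.
  have ep0 : 0 < ep by rewrite -ltcR -epsE.
  exists (ep ^+ 2 / 4); first by rewrite divr_gt0 // exprn_gt0.
  move=> u v [Mu hu] [Mv hv].
  set mid := 2^-1 *: (u + v).
  have Mmid : M mid by apply: subspaceZ => //; apply: subspaceD.
  have hm := dle _ Mmid.
  have par := parallelogram (x - u) (x - v).
  have e1 : x - u + (x - v) = 2 *: (x - mid).
    rewrite /mid scalerBr scalerA divff ?pnatr_eq0 // scale1r scaler_nat mulr2n.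
    by rewrite opprD addrACA.
  have e2 : x - u - (x - v) = v - u by rewrite opprB addrC addrA subrK.
  rewrite e1 e2 nrZ normr_nat in par.
  rewrite epsE -normrN opprB nrE ltcR.
  have re2 : complex.Re (2 : C) = 2 by [].
  rewrite re2 in par.
  have : nr (v - u) ^+ 2 < ep ^+ 2 by nra.
  by have := nr_ge0 (v - u); nra.
have Mp : M p.
  apply: cM; apply/closure_normP => eps eps0; have [r r0 h] := hp eps eps0.
  by have [u Mu hu] := adh r r0; exists u => //; apply: h.
have dp : nr (x - p) ^+ 2 <= d.
  rewrite leNgt; apply/negP => gt.
  set b := nr (x - p) in gt *.
  set g := b ^+ 2 - d.
  have g0 : 0 < g by rewrite subr_gt0.
  have b0 : 0 <= b := nr_ge0 _.
  have den0 : 0 < 4 * b + 2 + g.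
    by rewrite addr_gt0 // ltr_wpDl // mulr_ge0.
  set e := g / (4 * b + 2 + g).
  have e0 : 0 < e by rewrite divr_gt0.
  have eE : e * (4 * b + 2 + g) = g by rewrite /e mulfVK // gt_eqF.
  have ec0 : (0 : C) < e%:C%C by rewrite ltcR.
  have [r r0 h] := hp _ ec0.
  have m0 : 0 < Num.min r (g / 2) by rewrite lt_min r0 divr_gt0.
  have [u Mu hu] := adh _ m0.
  have hu2 : nr (x - u) ^+ 2 < d + g / 2.
    by apply: lt_le_trans hu _; rewrite lerD2l ge_min lexx orbT.
  have hpu : nr (p - u) < e.
    have := h u; rewrite nrE ltcR; apply; split => //.
    by apply: lt_le_trans hu _; rewrite lerD2l ge_min lexx.
  have tri : b <= nr (x - u) + nr (p - u).
    rewrite /b -[x - p](subrK (x - u)) (_ : x - p - (x - u) = - (p - u)); last first.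
      by rewrite !opprB addrC addrA subrK.
    by rewrite addrC; apply: le_trans (nrD _ _) _; rewrite nrN addrC.
  have a0 := nr_ge0 (x - u).
  have c0 := nr_ge0 (p - u).
  set a := nr (x - u) in hu2 tri a0.
  set c := nr (p - u) in hpu tri c0.
  have gE : g = b ^+ 2 - d by [].
  have ab : a < b by nra.
  have e1 : e < 1 by nra.
  have : b ^+ 2 <= (a + e) ^+ 2 by nra.
  nra.
exists p => // m Mm.
set w := x - p; set a := ip w m.
have dpw : nr w ^+ 2 <= d := dp.
set N := nr m ^+ 2.
have N0 : 0 <= N by apply: sqr_ge0.
set s := (1 + N)^-1.
have s0 : 0 < s by rewrite invr_gt0 ltr_pwDl.
have sE : s * (1 + N) = 1 by rewrite mulVf // gt_eqF // ltr_pwDl.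
set t : C := s%:C%C * a.
have Mq : M (p + t *: m).
  by rewrite addrC; case: sM => _; apply.
have h1 := dle _ Mq.
have eq1 : x - (p + t *: m) = w - t *: m by rewrite opprD addrA.
rewrite eq1 in h1; clearbody w.
set al := complex.Re `|a|.
have alE : `|a| = al%:C%C by rewrite RRe_real // ger0_real.
have key : nr (w - t *: m) ^+ 2 = nr w ^+ 2 + (- 2 * s + s ^+ 2 * N) * al ^+ 2.
  have tc : t^* = s%:C%C * a^*.
    by rewrite /t rmorphM /= geC0_conj // ler0c ltW.
  have kC : ip (w - t *: m) (w - t *: m) = ip w w +
      (- 2 * s%:C%C + s%:C%C ^+ 2 * N%:C%C) * al%:C%C ^+ 2.
    rewrite !(ipBl, ipBr, ipZl, ipZr) (ipC m w) -/a [ip m m]ipxxR -/N tc /t.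
    rewrite -alE normCK.
    ring.
  by move: kC; rewrite !ipxxR -rc2 -rcN -!rcX -!rcM -!rcD -rcM -rcD => /complexI.
rewrite key in h1.
have cneg : - 2 * s + s ^+ 2 * N < 0 by nra.
have h2 : 0 <= (- 2 * s + s ^+ 2 * N) * al ^+ 2 by lra.
have h3 : al ^+ 2 <= 0 by nra.
have al0 : al = 0 by nra.
by apply/normr0_eq0; rewrite alE al0.
Qed.

Lemma riesz (K : set H) : subspace K -> closed K -> forall f : H -> C,
  (forall a u v, K u -> K v -> f (a *: u + v) = a * f u + f v) ->
  (exists c : C, 0 <= c /\ forall u, K u -> `|f u| <= c * `|u|) ->
  exists2 y, K y & forall u, K u -> f u = ip u y.
Proof.
move=> sK cK f flin [c [c0 fb]].
have K0 : K 0 by case: sK.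
have f0 : f 0 = 0.
  by apply/eqP; rewrite -normr_le0; apply: le_trans (fb _ K0) _; rewrite normr0 mulr0.
have fZ a u : K u -> f (a *: u) = a * f u.
  by move=> Ku; rewrite -[a *: u]addr0 flin // f0 addr0.
have fB u v : K u -> K v -> f (u - v) = f u - f v.
  by move=> Ku Kv; rewrite addrC -scaleN1r flin // mulN1r addrC.
pose N := [set u | K u /\ f u = 0].
have sN : subspace N.
  split; first by split.
  move=> a x y [Kx fx] [Ky fy]; split; first by case: sK => _; apply.
  by rewrite flin // fx fy mulr0 addr0.
have cN : closed N.
  move=> u /closure_normP cu.
  have Ku : K u.
    apply: cK; apply/closure_normP => e e0.
    by have [v [Kv _] h] := cu e e0; exists v.
  split=> //; apply: (small_eq0 _ c) => // e e0.
  have [v [Kv fv] h] := cu e e0.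
  have -> : f u = f (u - v) by rewrite fB // fv subr0.
  have Kuv : K (u - v) by apply: subspaceB.
  apply: le_trans (fb _ Kuv) _.
  by rewrite mulrC ler_wpM2r // ltW.
case: (pselect (forall u, K u -> f u = 0)) => [fall|].
  by exists 0 => // u Ku; rewrite ip0r fall.
move=> /existsNP [u0 /not_implyP [Ku0 /eqP fu0]].
have [p [Kp fp] hp] := proj sN cN u0.
set v := u0 - p.
have Kv : K v by apply: subspaceB.
have fv : f v = f u0 by rewrite /v fB // fp subr0.
have v0 : v != 0 by apply: contraNneq fu0 => v0; rewrite -fv v0 f0.
set n := `|v| ^+ 2.
have n0 : n != 0 by rewrite /n sqrf_eq0 normr_eq0.
have nc : n^* = n by apply: geC0_conj; rewrite /n exprn_ge0.
have fv0 : f v != 0 by rewrite fv.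
exists ((f v)^* / n *: v); first by apply: subspaceZ.
move=> u Ku.
set w := u - (f u / f v) *: v.
have Nw : N w.
  split; first by apply: subspaceB => //; apply: subspaceZ.
  by rewrite /w fB ?fZ //; [rewrite mulfVK // subrr | apply: subspaceZ].
have h1 : ip v w = 0 by apply: hp.
have h2 : ip w v = 0 by rewrite ipC h1 conjC0.
rewrite /w ipBl ipZl ipxx -/n in h2.
rewrite ipZr rmorphM /= conjCK fmorphV /= nc.
have -> : ip u v = f u / f v * n by apply/eqP; rewrite -subr_eq0 h2.
by field; rewrite n0 fv0.
Qed.

End IP.
Section Adj.
Variable R : realType.
Local Notation C := R[i].

Lemma closure_uniq (H : completeNormedModType C) (ip : H -> H -> C)
  (hip : is_inner_product ip) (D : set H) z1 z2 :
  closure D z1 -> closure D z2 -> (forall x, D x -> ip x z1 = ip x z2) -> z1 = z2.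
Proof.
move=> c1 c2 h.
have h0 : forall x, D x -> ip x (z1 - z2) = 0.
  by move=> x Dx; rewrite (ipBr hip) h // subrr.
have e1 := closure_orth hip h0 c1.
have e2 := closure_orth hip h0 c2.
apply/eqP; rewrite -subr_eq0; apply/eqP; apply: (ip_eq0 hip).
by rewrite (ipBl hip) e1 e2 subrr.
Qed.

Lemma adj_spec (Ha Hb : completeNormedModType C) (ipa : Ha -> Ha -> C)
  (ipb : Hb -> Hb -> C) (K1 : set Ha) (K2 : set Hb) (A : operator Ha Hb) y :
  dom (adjoint ipa ipb K1 K2 A) y ->
  [/\ K2 y, K1 (op (adjoint ipa ipb K1 K2 A) y) &
     forall x, dom A x -> ipb (op A x) y = ipa x (op (adjoint ipa ipb K1 K2 A) y)].
Proof.
case=> K2y ex; have [] := xgetPex 0 ex; split => //.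
Qed.

Lemma adj_char (Ha Hb : completeNormedModType C) (ipa : Ha -> Ha -> C)
  (ipb : Hb -> Hb -> C) (hipa : is_inner_product ipa) (K2 : set Hb)
  (A : operator Ha Hb) y z :
  K2 y -> closure (dom A) z -> (forall x, dom A x -> ipb (op A x) y = ipa x z) ->
  dom (adjoint ipa ipb (closure (dom A)) K2 A) y /\ op (adjoint ipa ipb (closure (dom A)) K2 A) y = z.
Proof.
move=> K2y cz hz.
have hd : dom (adjoint ipa ipb (closure (dom A)) K2 A) y by split => //; exists z.
split => //.
have [_ c1 h1] := adj_spec hd.
apply: (closure_uniq hipa c1 cz) => x Dx.
by rewrite -h1 // hz.
Qed.

Lemma sq_le (n K : C) : 0 <= n -> 0 <= K -> n ^+ 2 <= K * n -> n <= K.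
Proof.
move=> n0 K0 h; have [->|nn0] := eqVneq n 0; first by [].
have np : 0 < n by rewrite lt_def nn0 n0.
by rewrite -(ler_pM2r np) -expr2.
Qed.

Lemma closure_prodP (U V : normedModType C) (A : set (U * V)) x y :
  closure A (x, y) <-> forall e : C, 0 < e ->
    exists2 q, A q & `|x - q.1| < e /\ `|y - q.2| < e.
Proof.
split.
  move=> cl e e0; have [q [Aq [h1 h2]]] := cl _ (nbhsx_ballx (x, y) e e0).
  by exists q => //; move: h1 h2; rewrite -!ball_normE.
move=> h B /nbhs_ballP [e /= e0 sub]; have [q Aq [h1 h2]] := h e e0.
by exists q; split=> //; apply: sub; split; rewrite -ball_normE.
Qed.
End Adj.

Section Main.
Variable R : realType.
Local Notation C := R[i].
Variables (H1 H2 : completeNormedModType C) (ip1 : H1 -> H1 -> C) (ip2 : H2 -> H2 -> C).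
Variables (hip1 : is_inner_product ip1) (hip2 : is_inner_product ip2).
Variables (T : operator H1 H2) (hT : linear_operator T).
Local Notation TX := (Tx ip1 ip2 T).
Local Notation TXX := (Txx ip1 ip2 T).
Local Notation KT := (HT T).
Local Notation KX := (HT (Tx ip1 ip2 T)).

Lemma domT_sub : subspace (dom T).
Proof. by case: hT => h0 h1 _; split. Qed.
Lemma KT_sub : subspace KT.
Proof. exact: closure_subspace domT_sub. Qed.
Lemma KT_closed : closed KT.
Proof. exact: closed_closure. Qed.
Lemma T_lin a x y : dom T x -> dom T y -> op T (a *: x + y) = a *: op T x + op T y.
Proof. by case: hT => _ _; apply. Qed.

Lemma Tx_spec y : dom TX y ->
  KT (op TX y) /\ forall x, dom T x -> ip2 (op T x) y = ip1 x (op TX y).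
Proof. by move=> /adj_spec []. Qed.

Lemma Tx_char y z : KT z -> (forall x, dom T x -> ip2 (op T x) y = ip1 x z) ->
  dom TX y /\ op TX y = z.
Proof. by move=> Kz hz; apply: (adj_char hip1). Qed.

Lemma Tx_lin a y1 y2 : dom TX y1 -> dom TX y2 ->
  dom TX (a *: y1 + y2) /\ op TX (a *: y1 + y2) = a *: op TX y1 + op TX y2.
Proof.
move=> /Tx_spec [K1 h1] /Tx_spec [K2 h2]; apply: Tx_char.
  by case: KT_sub => _; apply.
move=> x Dx; rewrite (ipDr hip2) (ipZr hip2) h1 // h2 //.
by rewrite (ipDr hip1) (ipZr hip1).
Qed.

Lemma domTx_sub : subspace (dom TX).
Proof.
split; last by move=> a x y h1 h2; case: (Tx_lin a h1 h2).
have [] := @Tx_char 0 0 _ _ => //.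
  by case: KT_sub.
by move=> x _; rewrite (ip0r hip2) (ip0r hip1).
Qed.

Lemma KX_sub : subspace KX.
Proof. exact: closure_subspace domTx_sub. Qed.
Lemma KX_closed : closed KX.
Proof. exact: closed_closure. Qed.

Lemma Txx_spec x : dom TXX x ->
  [/\ KT x, KX (op TXX x) & forall y, dom TX y -> ip1 (op TX y) x = ip2 y (op TXX x)].
Proof. by move=> /adj_spec. Qed.

Lemma Txx_char x z : KT x -> KX z -> (forall y, dom TX y -> ip1 (op TX y) x = ip2 y z) ->
  dom TXX x /\ op TXX x = z.
Proof. by move=> Kx Kz hz; apply: (adj_char hip2). Qed.

Lemma part1_fwd : boundedly_invertible KX KT TX -> boundedly_invertible KT KX TXX.
Proof.
case=> S [Sm Slin [c [c0 Sb]] Sinv1 Sinv2].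
have ex g : exists x, KT x /\ forall u, KT u -> ip1 u x = ip2 (S u) g.
  have fl : forall a u v, KT u -> KT v ->
      ip2 (S (a *: u + v)) g = a * ip2 (S u) g + ip2 (S v) g.
    by move=> a u v Ku Kv /=; rewrite Slin // (ipDl hip2) (ipZl hip2).
  have fb : exists c' : C, 0 <= c' /\ forall u, KT u -> `|ip2 (S u) g| <= c' * `|u|.
    exists (c * `|g|); split; first by rewrite mulr_ge0.
    move=> u Ku; apply: le_trans (CS hip2 _ _) _; rewrite mulrAC.
    by apply: ler_wpM2r => //; apply: Sb.
  have [x Kx hx] := riesz hip1 KT_sub KT_closed fl fb.
  by exists x; split => // u Ku; rewrite hx.
pose S' g := xget 0 [set x | KT x /\ forall u, KT u -> ip1 u x = ip2 (S u) g].
have S'P g : KT (S' g) /\ forall u, KT u -> ip1 u (S' g) = ip2 (S u) g.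
  exact: (xgetPex 0 (ex g)).
have S'U g x : KT x -> (forall u, KT u -> ip1 u x = ip2 (S u) g) -> S' g = x.
  move=> Kx hx; have [K' h'] := S'P g.
  apply: (closure_uniq hip1 (D := KT)); try exact: subset_closure.
  by move=> u Ku; rewrite h' // hx.
exists S'; split.
- by move=> g _; case: (S'P g).
- move=> a g h Kg Kh; apply: S'U.
    by case: KT_sub => _; apply; [case: (S'P g)|case: (S'P h)].
  move=> u Ku; rewrite (ipDr hip1) (ipZr hip1) (ipDr hip2) (ipZr hip2).
  by case: (S'P g) => _ -> //; case: (S'P h) => _ -> //.
- exists c; split => // g Kg; have [Kx hx] := S'P g.
  apply: sq_le => //; first by rewrite mulr_ge0.
  have -> : `|S' g| ^+ 2 = `|ip2 (S (S' g)) g| by rewrite -hx // (ipxx hip1) ger0_norm // exprn_ge0.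
  apply: le_trans (CS hip2 _ _) _; rewrite mulrAC.
  by apply: ler_wpM2r => //; apply: Sb.
- move=> g Kg; have [Kx hx] := S'P g; apply: Txx_char => // y Dy.
  have [Ky _] := Tx_spec Dy.
  by rewrite hx // Sinv2.
- move=> f Df; have [Kf Kz hf] := Txx_spec Df; apply: S'U => // u Ku.
  by have [Du Eu] := Sinv1 u Ku; rewrite -{1}Eu hf.
Qed.

Lemma part1_bwd : boundedly_invertible KT KX TXX -> boundedly_invertible KX KT TX.
Proof.
case=> S' [Sm Slin [c [c0 Sb]] Sinv1 Sinv2].
have ex g : exists y, KX y /\ forall z, KX z -> ip2 z y = ip1 (S' z) g.
  have fl : forall a u v, KX u -> KX v ->
      ip1 (S' (a *: u + v)) g = a * ip1 (S' u) g + ip1 (S' v) g.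
    by move=> a u v Ku Kv /=; rewrite Slin // (ipDl hip1) (ipZl hip1).
  have fb : exists c' : C, 0 <= c' /\ forall u, KX u -> `|ip1 (S' u) g| <= c' * `|u|.
    exists (c * `|g|); split; first by rewrite mulr_ge0.
    move=> u Ku; apply: le_trans (CS hip1 _ _) _; rewrite mulrAC.
    by apply: ler_wpM2r => //; apply: Sb.
  have [x Kx hx] := riesz hip2 KX_sub KX_closed fl fb.
  by exists x; split => // u Ku; rewrite hx.
pose S g := xget 0 [set y | KX y /\ forall z, KX z -> ip2 z y = ip1 (S' z) g].
have SP g : KX (S g) /\ forall z, KX z -> ip2 z (S g) = ip1 (S' z) g.
  exact: (xgetPex 0 (ex g)).
have SU g y : KX y -> (forall z, KX z -> ip2 z y = ip1 (S' z) g) -> S g = y.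
  move=> Ky hy; have [K' h'] := SP g.
  apply: (closure_uniq hip2 (D := KX)); try exact: subset_closure.
  by move=> u Ku; rewrite h' // hy.
exists S; split.
- by move=> g _; case: (SP g).
- move=> a g h Kg Kh; apply: SU.
    by case: KX_sub => _; apply; [case: (SP g)|case: (SP h)].
  move=> u Ku; rewrite (ipDr hip1) (ipZr hip1) (ipDr hip2) (ipZr hip2).
  by case: (SP g) => _ -> //; case: (SP h) => _ -> //.
- exists c; split => // g Kg; have [Kx hx] := SP g.
  apply: sq_le => //; first by rewrite mulr_ge0.
  have -> : `|S g| ^+ 2 = `|ip1 (S' (S g)) g| by rewrite -hx // (ipxx hip2) ger0_norm // exprn_ge0.
  apply: le_trans (CS hip1 _ _) _; rewrite mulrAC.
  by apply: ler_wpM2r => //; apply: Sb.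
- move=> g Kg; have [Ky hy] := SP g; apply: Tx_char => // x Dx.
  have [p Kp hp] := proj hip2 KX_sub KX_closed (op T x).
  have [Dx' Ex] : dom TXX x /\ op TXX x = p.
    apply: Txx_char => //; first exact: subset_closure.
    move=> y Dy; have [_ hy'] := Tx_spec Dy.
    rewrite (ipC hip1) -hy' // (ipJ hip2).
    rewrite -[op T x](subrK p) (ipDr hip2) (ipC hip2 y (op T x - p)) hp ?conjC0 ?add0r //.
    exact: subset_closure.
  have Sp : S' p = x by rewrite -Ex Sinv2.
  by rewrite -[op T x](subrK p) (ipDl hip2) hp // add0r hy // Sp.
- move=> f Df; have [Kf hf] := Tx_spec Df; apply: SU => //; first exact: subset_closure.
  move=> z Kz; have [Dz Ez] := Sinv1 z Kz.
  have [_ _ h] := Txx_spec Dz.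
  by rewrite (ipC hip1) h // Ez -(ipC hip2).
Qed.

Local Notation G := (graph T).
Local Notation cG := (closure (graph T)).
Local Notation Tb := (op_closure T).

Lemma T0 : op T 0 = 0.
Proof.
have D0 : dom T 0 by case: domT_sub.
by have := T_lin (-1) D0 D0; rewrite scaler0 addr0 scaleN1r addNr.
Qed.

Lemma graph_sub : subspace G.
Proof.
split; first by split; [case: domT_sub | rewrite T0].
move=> a [x1 y1] [x2 y2] [/= D1 ->] [/= D2 ->]; split => /=.
  by case: domT_sub => _; apply.
by rewrite T_lin.
Qed.

Lemma cG_sub : subspace cG.
Proof. exact: closure_subspace graph_sub. Qed.

Lemma G_cG x : dom T x -> cG (x, op T x).
Proof. by move=> Dx; apply: subset_closure. Qed.

Lemma cG_uniq : closable T -> forall x y1 y2, cG (x, y1) -> cG (x, y2) -> y1 = y2.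
Proof.
move=> cl x y1 y2 h1 h2.
have := subspaceB cG_sub h1 h2.
rewrite (_ : (x, y1) - (x, y2) = (0, y1 - y2)); last by change ((x - x, y1 - y2) = (0, y1 - y2)); rewrite subrr.
move=> /cl /eqP.
by rewrite subr_eq0 => /eqP.
Qed.

Lemma Tb_spec x : dom Tb x -> cG (x, op Tb x).
Proof. by move=> ex; apply: (xgetPex 0 ex). Qed.

Lemma Tb_char : closable T -> forall x y, cG (x, y) -> dom Tb x /\ op Tb x = y.
Proof.
move=> cl x y h; have hd : dom Tb x by exists y.
by split => //; apply: (cG_uniq cl (Tb_spec hd) h).
Qed.

Lemma cG_adj x y w : cG (x, y) -> dom TX w -> ip2 y w = ip1 x (op TX w).
Proof.
move=> cxy Dw; have [_ hw] := Tx_spec Dw.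
apply/eqP; rewrite -subr_eq0; apply/eqP.
apply: (small_eq0 _ (`|w| + `|op TX w|)) => // e e0.
have [[a b] [/= Da ->] /= [ha hb]] := (closure_prodP _ _ _).1 cxy e e0.
rewrite -[y](subrK (op T a)) -[x](subrK a) (ipDl hip2) (ipDl hip1) hw //.
rewrite opprD addrA addrAC addrK.
apply: le_trans (ler_normB _ _) _.
rewrite mulrDr; apply: lerD.
  by apply: le_trans (CS hip2 _ _) _; rewrite ler_wpM2r // ltW.
by apply: le_trans (CS hip1 _ _) _; rewrite ler_wpM2r // ltW.
Qed.

Lemma setT_sub (V : lmodType C) : subspace [set: V].
Proof. by []. Qed.

Lemma part2_bwd : closure (dom T) = setT -> closable T ->
  boundedly_invertible setT setT Tb -> boundedly_invertible setT setT TX.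
Proof.
move=> dd cl [S [_ Slin [c [c0 Sb]] Sinv1 Sinv2]].
have ex g : exists y, forall z, ip2 z y = ip1 (S z) g.
  have fl : forall a u v, [set: H2] u -> [set: H2] v ->
      ip1 (S (a *: u + v)) g = a * ip1 (S u) g + ip1 (S v) g.
    by move=> a u v Ku Kv /=; rewrite Slin // (ipDl hip1) (ipZl hip1).
  have fb : exists c' : C, 0 <= c' /\ forall u, [set: H2] u -> `|ip1 (S u) g| <= c' * `|u|.
    exists (c * `|g|); split; first by rewrite mulr_ge0.
    move=> u Ku; apply: le_trans (CS hip1 _ _) _; rewrite mulrAC.
    by apply: ler_wpM2r => //; apply: Sb.
  have [x _ hx] := riesz hip2 (setT_sub H2) closedT fl fb.
  by exists x => u; rewrite hx.
pose S2 g := xget 0 [set y | forall z, ip2 z y = ip1 (S z) g].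
have SP g : forall z, ip2 z (S2 g) = ip1 (S z) g.
  exact: (xgetPex 0 (ex g)).
have SU g y : (forall z, ip2 z y = ip1 (S z) g) -> S2 g = y.
  move=> hy; have h' := SP g.
  apply: (closure_uniq hip2 (D := setT)); try exact: subset_closure.
  by move=> u _; rewrite h' hy.
exists S2; split => //.
- move=> a g h _ _; apply: SU => z.
  by rewrite (ipDr hip1) (ipZr hip1) (ipDr hip2) (ipZr hip2) !SP.
- exists c; split => // g _.
  apply: sq_le => //; first by rewrite mulr_ge0.
  have -> : `|S2 g| ^+ 2 = `|ip1 (S (S2 g)) g| by rewrite -SP (ipxx hip2) ger0_norm // exprn_ge0.
  apply: le_trans (CS hip1 _ _) _; rewrite mulrAC.
  by apply: ler_wpM2r => //; apply: Sb.
- move=> g _; apply: Tx_char; first by rewrite /HT dd.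
  move=> x Dx; rewrite SP.
  have [Db Eb] := Tb_char cl (G_cG Dx).
  by rewrite -Eb Sinv2.
- move=> f Df; apply: SU => z.
  have [Dz Ez] := Sinv1 z Logic.I.
  have := cG_adj (Tb_spec Dz) Df.
  by rewrite Ez.
Qed.

Lemma part2_fwd : closure (dom T) = setT -> closable T ->
  boundedly_invertible setT setT TX -> boundedly_invertible setT setT Tb.
Proof.
move=> dd cl [S [_ Slin [c [c0 Sb]] Sinv1 Sinv2]].
have BB x y : cG (x, y) -> `|x| <= c * `|y|.
  move=> cxy; apply: sq_le => //; first by rewrite mulr_ge0.
  have [Dx Ex] := Sinv1 x Logic.I.
  have e := cG_adj cxy Dx; rewrite Ex in e.
  have -> : `|x| ^+ 2 = `|ip2 y (S x)| by rewrite e (ipxx hip1) ger0_norm // exprn_ge0.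
  apply: le_trans (CS hip2 _ _) _; rewrite (mulrC c) -mulrA ler_wpM2l //.
  exact: Sb.
have injG x1 x2 y : cG (x1, y) -> cG (x2, y) -> x1 = x2.
  move=> h1 h2; have := subspaceB cG_sub h1 h2.
  rewrite (_ : (x1, y) - (x2, y) = (x1 - x2, 0)); last first.
    by change ((x1 - x2, y - y) = (x1 - x2, 0)); rewrite subrr.
  by move/BB; rewrite normr0 mulr0 normr_le0 subr_eq0 => /eqP.
pose Rg := [set y | exists2 x, dom T x & y = op T x].
have sRg : subspace Rg.
  split; first by exists 0; [case: domT_sub | rewrite T0].
  move=> a _ _ [x1 D1 ->] [x2 D2 ->]; exists (a *: x1 + x2).
    by case: domT_sub => _; apply.
  by rewrite T_lin.
have S0 : S 0 = 0.
  apply/eqP; rewrite -normr_le0; apply: le_trans (Sb _ Logic.I) _.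
  by rewrite normr0 mulr0.
have dense g : closure Rg g.
  have [p Mp hp] := proj hip2 (closure_subspace sRg) (@closed_closure _ Rg) g.
  have [D0 E0] : dom TX (g - p) /\ op TX (g - p) = 0.
    apply: Tx_char; first by case: KT_sub.
    move=> x Dx; rewrite (ip0r hip1) (ipC hip2) hp ?conjC0 //.
    by apply: subset_closure; exists x.
  have : g - p = 0 by rewrite -(Sinv2 _ D0) E0 S0.
  by move/eqP; rewrite subr_eq0 => /eqP ->.
have exg g : exists x, cG (x, g).
  pose A (r : R) := [set x | dom T x /\ `|op T x - g| < r%:C%C].
  have [p hp] : exists p : H1, forall eps : C, 0 < eps ->
      exists2 r, 0 < r & forall u, A r u -> `|p - u| < eps.
    apply: cauchy_family.
    - move=> r r0; have r0' : (0:C) < r%:C%C by rewrite ltcR.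
      have [y [x Dx ->] h] := (closure_normP _ _).1 (dense g) _ r0'.
      by exists x; split => //; rewrite distrC.
    - by move=> r s r0 rs x [Dx h]; split => //; apply: lt_le_trans h _; rewrite lecR.
    move=> eps eps0.
    set ep := complex.Re eps.
    have epsE : eps = ep%:C%C by rewrite RRe_real // ger0_real // ltW.
    have ep0 : 0 < ep by rewrite -ltcR -epsE.
    set cr := complex.Re c.
    have cE : c = cr%:C%C by rewrite RRe_real // ger0_real.
    have cr0 : 0 <= cr by rewrite -lecR -cE.
    have cr1 : 0 < 2 * (cr + 1) by lra.
    set r := ep / (2 * (cr + 1)).
    have r0 : 0 < r by rewrite divr_gt0.
    have rE : r * (2 * (cr + 1)) = ep by rewrite /r mulfVK // gt_eqF.
    exists r => // u v [Du hu] [Dv hv].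
    have Duv : dom T (u - v) by apply: subspaceB => //; apply: domT_sub.
    have Tuv : op T (u - v) = op T u - op T v.
      by rewrite -[u - v]/(u + - v) addrC -scaleN1r T_lin // scaleN1r addrC.
    have h1 := BB _ _ (G_cG Duv); rewrite Tuv in h1.
    have h2 : `|op T u - op T v| < (2 * r)%:C%C.
      have -> : op T u - op T v = (op T u - g) - (op T v - g).
        by rewrite opprB addrA subrK.
      apply: le_lt_trans (ler_normB _ _) _.
      by rewrite mulr2n mulrDl mul1r rcD ltrD.
    apply: le_lt_trans h1 _; rewrite cE epsE.
    apply: le_lt_trans (ler_wpM2l _ (ltW h2)) _; first by rewrite ler0c.
    by rewrite -rcM ltcR; nra.
  exists p; apply/closure_prodP => e e0.
  have [r r0 hr] := hp e e0.
  set ee := complex.Re e.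
  have eE : e = ee%:C%C by rewrite RRe_real // ger0_real // ltW.
  have ee0 : 0 < ee by rewrite -ltcR -eE.
  have m0 : (0 : C) < (Num.min r ee)%:C%C by rewrite ltcR lt_min r0 ee0.
  have [y [x Dx ->] h] := (closure_normP _ _).1 (dense g) _ m0.
  exists (x, op T x) => /=; first by split.
  split.
    apply: hr; split => //; rewrite distrC; apply: lt_le_trans h _.
    by rewrite lecR ge_min lexx.
  by apply: lt_le_trans h _; rewrite eE lecR ge_min lexx orbT.
pose Sb' g := xget 0 [set x | cG (x, g)].
have SbP g : cG (Sb' g, g) by apply: (xgetPex 0 (exg g)).
exists Sb'; split => //.
- move=> a g h _ _; apply: injG (SbP (a *: g + h)) _.
  exact: (proj2 cG_sub a _ _ (SbP g) (SbP h)).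
- by exists c; split => // g _; apply: BB (SbP g).
- by move=> g _; apply: Tb_char cl _ _ (SbP g).
- by move=> f Df; apply: injG (SbP _) (Tb_spec Df).
Qed.

End Main.

Unset Implicit Arguments.
Set Strict Implicit.

Theorem proposition3p13 (R : realType) (H1 H2 : completeNormedModType R[i])
    (ip1 : H1 -> H1 -> R[i]) (ip2 : H2 -> H2 -> R[i])
    (hip1 : is_inner_product ip1) (hip2 : is_inner_product ip2)
    (T : operator H1 H2) (hT : linear_operator T) :
  (boundedly_invertible (HT (Tx ip1 ip2 T)) (HT T) (Tx ip1 ip2 T) <->
   boundedly_invertible (HT T) (HT (Tx ip1 ip2 T)) (Txx ip1 ip2 T)) /\
  (densely_defined T -> closable T ->
   (boundedly_invertible setT setT (Tstar ip1 ip2 T) <->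
    boundedly_invertible setT setT (op_closure T))).
Proof.
split.
  split; [exact (part1_fwd hip1 hip2 hT) | exact (part1_bwd hip1 hip2 hT)].
move=> dd cl.
have TsE : Tstar ip1 ip2 T = Tx ip1 ip2 T by rewrite /Tstar /Tx /HT dd.
rewrite TsE; split; [exact (part2_fwd hip1 hip2 hT dd cl) | exact (part2_bwd hip1 hip2 hT dd cl)].
Qed.
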